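(* Let $n\ge 6$ be even. (a) If $d_*$ and $d_*'$ are neighbors with $d_*\ne d_*'$, then $d_*$ and $d_*'$ are determined. (b) A Latin square $L$ of order $n$ with inner distance $\frac n2-1$ is a row product if and only if there exists $i\in[1,n-1]$ such that rows $i$ and $i+1$ of $L$ have the same difference row.
   Context: Symbols are $[1,n]$; $\mathrm{dist}(a,b)$ is the minimum of the residues of $a-b$ and $b-a$ mod $n$ (in $[0,n-1]$). A Latin row is a permutation $(s_1,\dots,s_n)$ of $[1,n]$; its inner distance is $\min_j\mathrm{dist}(s_j,s_{j+1})$; its difference row is $(h_1,\dots,h_{n-1})$ with $h_j\in[0,n-1]$, $h_j\equiv s_{j+1}-s_j\pmod n$, and its extended difference row is $d_*=(\epsilon_1,\dots,\epsilon_{n-1},h)$ with $\epsilon_j=h_j-\frac n2$ and $h=h_n-\frac n2$, where $h_n\in[0,n-1]$, $h_n\equiv s_1-s_n\pmod n$. A Latin rectangle is a matrix over $[1,n]$ with no repeats in rows or columns; its inner distance is the minimum of $\mathrm{dist}$ over symbols in horizontally or vertically adjacent cells. Two extended difference rows $d_*=(\epsilon_j)$ and $d_*'=(\epsilon'_j)$ of Latin rows of inner distance $\frac n2-1$ are neighbors if there are Latin rows $r,r'$ with these extended difference rows such that the $2\times n$ matrix with rows $r,r'$ is a Latin rectangle of inner distance $\frac n2-1$. They are determined if there exist $1\le j_1<j_2\le n$ with $\left|\sum_{j=j_1}^{j_2-1}(\epsilon'_j-\epsilon_j)\right|=2$. For a Latin square $L=(m_{i,j})$, $H$ is the $n\times(n-1)$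 matrix with $h_{i,j}\equiv m_{i,j+1}-m_{i,j}$ and $V$ the $(n-1)\times n$ matrix with $v_{i,j}\equiv m_{i+1,j}-m_{i,j}$ (mod $n$, in $[0,n-1]$). A row product is a Latin square obtained by adding a constant mod $n$ to all entries of $\mathrm{prod}(d,d')$, the $n\times n$ matrix with $1$ in cell $(1,1)$ whose $H$ has every row equal to a difference row $d$ and whose $V$ has every column equal to a difference row $d'$. *)

(* Defs.v *)
(* Symbols are the naturals 1..n; rows/columns are seqs. *)
From mathcomp Require Import all_boot all_order all_algebra.
Set Implicit Arguments. Unset Strict Implicit. Unset Printing Implicit Defensive.
Import GRing.Theory Num.Theory.

Definition dist (n a b : nat) : nat := minn ((a + n - b) %% n) ((b + n - a) %% n).

Definition latin_row (n : nat) (s : seq nat) : bool := perm_eq s (iota 1 n).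

Definition innerdist (n : nat) (s : seq nat) : nat :=
  \big[minn/n]_(j < (size s).-1) dist n (nth 0 s j) (nth 0 s j.+1).

Definition diffrow (n : nat) (s : seq nat) : seq nat :=
  mkseq (fun j => (nth 0 s j.+1 + n - nth 0 s j) %% n) (size s).-1.

Definition extdiff (n : nat) (s : seq nat) : seq int :=
  mkseq (fun j => (Posz (nth 0 (diffrow n s) j) - Posz n./2)%R) (n.-1)
  ++ [:: (Posz ((head 0 s + n - last 0 s) %% n) - Posz n./2)%R].

(* matrices are seqs of rows; column j *)
Definition col (L : seq (seq nat)) (j : nat) : seq nat := [seq nth 0 r j | r <- L].

Definition latin_rect (n : nat) (L : seq (seq nat)) : bool :=
  all (latin_row n) L && all (fun j => uniq (col L j)) (iota 0 n).

Definition latin_square (n : nat) (L : seq (seq nat)) : bool :=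
  (size L == n) && latin_rect n L.

Definition rect_innerdist (n : nat) (L : seq (seq nat)) : nat :=
  minn (\big[minn/n]_(r <- L) innerdist n r)
       (\big[minn/n]_(j < n) innerdist n (col L j)).

Definition is_edr (n : nat) (d : seq int) : Prop :=
  exists s, latin_row n s /\ innerdist n s = n./2 - 1 /\ extdiff n s = d.

Definition neighbors (n : nat) (d d' : seq int) : Prop :=
  exists r r', extdiff n r = d /\ extdiff n r' = d' /\
    latin_rect n [:: r; r'] /\ rect_innerdist n [:: r; r'] = n./2 - 1.

Definition determined (n : nat) (d d' : seq int) : Prop :=
  exists j1 j2 : nat, [/\ 1 <= j1, j1 < j2 & j2 <= n] /\
    `| (\sum_(j1 <= j < j2) (nth (0:int) d' j.-1 - nth (0:int) d j.-1))%R |%N = 2.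

Definition entry (L : seq (seq nat)) (i j : nat) : nat := nth 0 (nth [::] L i) j.

Definition is_prod (n : nat) (d d' : seq nat) (M : seq (seq nat)) : Prop :=
  [/\ size M = n,
      all (fun r => (size r == n) && all (fun x => (1 <= x <= n)) r) M,
      entry M 0 0 = 1,
      all (fun r => diffrow n r == d) M &
      all (fun j => diffrow n (col M j) == d') (iota 0 n)].

Definition is_diffrow (n : nat) (d : seq nat) : Prop :=
  exists s, latin_row n s /\ diffrow n s = d.

Definition row_product (n : nat) (L : seq (seq nat)) : Prop :=
  latin_square n L /\
  exists (d d' : seq nat) (M : seq (seq nat)) (c : nat),
    [/\ is_diffrow n d, is_diffrow n d', is_prod n d d' M &
        forall i j, i < n -> j < n -> entry L i j = entry M i j + c %[mod n]].

(* Main.v *)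
Require Import Defs.
From mathcomp Require Import all_boot all_order all_algebra.
From mathcomp Require Import zify.
Import GRing.Theory Num.Theory.

Lemma mod_small x n : 0 < n -> x < 3 * n ->
  (x < n /\ x %% n = x) \/ (n <= x < 2 * n /\ x %% n = x - n) \/
  (2 * n <= x /\ x %% n = x - 2 * n).
Proof.
move=> n0 hx; have e := divn_eq x n; have r := ltn_pmod x n0.
have : x %/ n < 3 by rewrite ltn_divLR.
move: e r; set q := x %/ n; set rr := x %% n.
case: q => [|[|[|q]]] //= e r0 _; lia.
Qed.

Definition stp n a b := (b + n - a) %% n.

Lemma stp_cases n a b : 0 < n -> 1 <= a <= n -> b <= 2 * n ->
  (a <= b /\ stp n a b = b - a /\ b < a + n) \/ (b < a /\ stp n a b = b + n - a)
  \/ (a + n <= b /\ stp n a b = b - a - n).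
Proof.
move=> n0 ha hb; rewrite /stp.
have := @mod_small (b + n - a) n n0 ltac:(lia). lia.
Qed.

Lemma sum_nth_perm s n : latin_row n s -> \sum_(j < n) nth 0 s j = \sum_(j < n) j.+1.
Proof.
move=> hs; have sz : size s = n by rewrite (perm_size hs) size_iota.
rewrite -(big_mkord xpredT (fun j => nth 0 s j)) -{1}sz -(big_nth 0 xpredT id).
rewrite (perm_big _ hs) /= -(big_mkord xpredT succn).
rewrite /index_iota subn0 (iotaDl 1 0 n) big_map.
by apply: eq_bigr => i _; rewrite add1n.
Qed.

Section LR.
Variables (n : nat) (s : seq nat) (hs : latin_row n s).
Lemma lr_size : size s = n.
Proof. by rewrite (perm_size hs) size_iota. Qed.
Lemma lr_uniq : uniq s.
Proof. by rewrite (perm_uniq hs) iota_uniq. Qed.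
Lemma lr_mem x : (x \in s) = (1 <= x <= n).
Proof. by rewrite (perm_mem hs) mem_iota add1n ltnS. Qed.
Lemma lr_bound j : j < n -> 1 <= nth 0 s j <= n.
Proof. by move=> jn; rewrite -lr_mem mem_nth // lr_size. Qed.
Lemma lr_inj j k : j < n -> k < n -> nth 0 s j = nth 0 s k -> j = k.
Proof. by move=> jn kn /eqP; rewrite nth_uniq ?lr_size ?lr_uniq // => /eqP. Qed.
Lemma lr_surj x : 1 <= x <= n -> exists2 j, j < n & nth 0 s j = x.
Proof.
move=> hx; exists (index x s); first by rewrite -lr_size index_mem lr_mem.
by rewrite nth_index // lr_mem.
Qed.
End LR.
Arguments lr_size {n s}. Arguments lr_uniq {n s}. Arguments lr_mem {n s}.
Arguments lr_bound {n s}. Arguments lr_inj {n s}. Arguments lr_surj {n s}.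

Lemma bigmin_seq_ge (T : eqType) (L : seq T) (k x : nat) (G : T -> nat) :
  k <= \big[minn/x]_(r <- L) G r -> forall r, r \in L -> k <= G r.
Proof.
elim: L => [|a L IH]; first by move=> _ r; rewrite in_nil.
rewrite big_cons leq_min => /andP[h1 h2] r; rewrite inE => /orP[/eqP->//|]; exact: IH.
Qed.

Lemma bigmin_ge (m k x : nat) (F : nat -> nat) :
  k <= \big[minn/x]_(j < m) F j -> forall j, j < m -> k <= F j.
Proof.
rewrite -(big_mkord (fun _ => true) F) => h j jm; have := @bigmin_seq_ge _ _ _ _ _ h j.
by rewrite mem_index_iota; apply.
Qed.

Lemma dist_step n h a b : n = 2 * h -> 3 <= h -> 1 <= a <= n -> 1 <= b <= n ->
  h - 1 <= dist n a b -> h - 1 <= stp n a b <= h + 1.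
Proof.
move=> nh h3 ha hb; rewrite /dist -/(stp n b a) -/(stp n a b) leq_min => /andP[].
have n0 : 0 < n by lia.
have := @stp_cases n a b n0 ha ltac:(lia).
have := @stp_cases n b a n0 hb ltac:(lia). lia.
Qed.

Definition good n h s := latin_row n s /\
  forall j, j < n.-1 -> h - 1 <= stp n (nth 0 s j) (nth 0 s j.+1) <= h + 1.

Lemma good_of n h s : n = 2 * h -> 3 <= h -> latin_row n s -> h - 1 <= innerdist n s -> good n h s.
Proof.
move=> nh h3 hs hi; split=> // j jn.
have sz := lr_size hs.
apply: dist_step => //; try apply: (lr_bound hs); try lia.
move: hi; rewrite /innerdist sz => hi; exact: (bigmin_ge _ _ _ (fun j => dist n (nth 0 s j) (nth 0 s j.+1)) hi).
Qed.

Lemma L1 n (F : nat -> nat) : 0 < n -> (forall j, j < n -> F j <= 2) ->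
  (\sum_(j < n) F j) %% n = 0 ->
  (forall j, j < n -> F j = 0) \/ (forall j, j < n -> F j = 1) \/
  (forall j, j < n -> F j = 2) \/
  ((exists2 j, j < n & F j = 0) /\ (exists2 j, j < n & F j = 2)).
Proof.
move=> n0 hF hs.
set S := \sum_(j < n) F j.
have Sle : S <= 2 * n.
  rewrite /S -[X in _ <= X * _]/(2) mulnC -[n in n * 2]card_ord -sum_nat_const.
  by apply: leq_sum => i _; apply: hF.
have : S = 0 \/ S = n \/ S = 2 * n.
  have := @mod_small S n n0 ltac:(lia). rewrite hs. clear. lia.
clear hs; case=> [S0|[Sn|S2]].
- left=> j jn; move/eqP: S0; rewrite /S sum_nat_eq0 => /forallP /(_ (Ordinal jn)) /eqP //.
- case: (boolP [exists j : 'I_n, F j == 0]) => [/existsP[j0 /eqP Fj0]|no0];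
  case: (boolP [exists j : 'I_n, F j == 2]) => [/existsP[j2 /eqP Fj2]|no2].
  + by right; right; right; split; [exists j0 | exists j2].
  + (* all <= 1, sum = n -> all 1 *)
    right; left=> j jn.
    have le1 : forall i : 'I_n, F i <= 1.
      move=> i; have := hF i (ltn_ord i); move: no2; rewrite negb_exists => /forallP /(_ i).
      lia.
    have : \sum_(i < n) (1 - F i) = 0.
      have : \sum_(i < n) (1 - F i + F i) = \sum_(i < n) (1 - F i) + S by rewrite big_split.
      rewrite Sn.
      have -> : \sum_(i < n) (1 - F i + F i) = n.
        by rewrite (eq_bigr (fun _ => 1)) ?sum_nat_const ?card_ord ?muln1 // => i _; rewrite subnK.
      lia.
    move/eqP; rewrite sum_nat_eq0 => /forallP /(_ (Ordinal jn)) /eqP.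
    have := le1 (Ordinal jn); rewrite /=. lia.
  + right; left=> j jn.
    have ge1 : forall i : 'I_n, 1 <= F i.
      move=> i; move: no0; rewrite negb_exists => /forallP /(_ i). lia.
    have : \sum_(i < n) (F i - 1) = 0.
      have : \sum_(i < n) (F i - 1 + 1) = \sum_(i < n) (F i - 1) + \sum_(i < n) 1 by rewrite big_split.
      rewrite sum_nat_const card_ord muln1.
      have -> : \sum_(i < n) (F i - 1 + 1) = S.
        by apply: eq_bigr => i _; rewrite subnK.
      lia.
    move/eqP; rewrite sum_nat_eq0 => /forallP /(_ (Ordinal jn)) /eqP.
    have := ge1 (Ordinal jn); rewrite /=. lia.
  + right; left=> j jn.
    have e1 : forall i : 'I_n, F i = 1.
      move=> i; have := hF i (ltn_ord i).
      move: no0; rewrite negb_exists => /forallP /(_ i).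
      move: no2; rewrite negb_exists => /forallP /(_ i). lia.
    exact: (e1 (Ordinal jn)).
- right; right; left=> j jn.
  have : \sum_(i < n) (2 - F i) = 0.
    have : \sum_(i < n) (2 - F i + F i) = \sum_(i < n) (2 - F i) + S by rewrite big_split.
    have -> : \sum_(i < n) (2 - F i + F i) = 2 * n.
      rewrite (eq_bigr (fun _ => 2)); last by move=> i _; rewrite subnK ?hF.
      by rewrite sum_nat_const card_ord mulnC.
    rewrite -/S S2. lia.
  move/eqP; rewrite sum_nat_eq0 => /forallP /(_ (Ordinal jn)) /eqP.
  have := hF j jn; rewrite /=. lia.
Qed.

Lemma sum_stp_mod n A C : latin_row n A -> latin_row n C ->
  (\sum_(j < n) stp n (nth 0 A j) (nth 0 C j)) %% n = 0.
Proof.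
move=> hA hC; rewrite /stp modn_summ.
have e : \sum_(j < n) (nth 0 C j + n - nth 0 A j) + \sum_(j < n) nth 0 A j =
         \sum_(j < n) nth 0 C j + \sum_(j < n) n.
  rewrite -!big_split /=; apply: eq_bigr => j _.
  have := lr_bound hA j (ltn_ord j). lia.
rewrite (sum_nth_perm _ _ hA) (sum_nth_perm _ _ hC) sum_nat_const card_ord in e.
have -> : \sum_(j < n) (nth 0 C j + n - nth 0 A j) = n * n by lia.
by rewrite modnMl.
Qed.

Arguments stp_cases {n a b}.
Lemma stp_ex n a b : 0 < n -> 1 <= a <= n -> 1 <= b <= n ->
  (a <= b /\ stp n a b + a = b) \/ (b < a /\ stp n a b + a = b + n).
Proof. move=> n0 ha hb; have := stp_cases n0 ha (_ : b <= 2 * n). lia. Qed.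
Arguments stp_ex {n a b}.

Lemma stp_cong n a b c d : 0 < n -> 1 <= a <= n -> 1 <= b <= n -> 1 <= c <= n -> 1 <= d <= n ->
  stp n a b + stp n b d = stp n a c + stp n c d \/
  stp n a b + stp n b d = stp n a c + stp n c d + n \/
  stp n a b + stp n b d + n = stp n a c + stp n c d.
Proof.
move=> n0 ha hb hc hd.
have := stp_ex n0 ha hb; have := stp_ex n0 hb hd; have := stp_ex n0 ha hc; have := stp_ex n0 hc hd.
lia.
Qed.

Arguments stp_cong {n a b c d}.
Lemma stp_addmod n a b : 1 <= a <= n -> (a + stp n a b) %% n = b %% n.
Proof.
move=> ha; rewrite /stp modnDmr addnBA; last by lia.
by rewrite addnC addnK modnDr.
Qed.

Lemma stp_sum_mod n a b c d : 1 <= a <= n -> 1 <= c <= n ->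
  stp n a b + stp n c d = n -> (b + d) %% n = (a + c) %% n.
Proof.
move=> ha hc e.
rewrite -modnDm -(@stp_addmod n a b ha) -(@stp_addmod n c d hc) modnDm.
have -> : a + stp n a b + (c + stp n c d) = a + c + n by lia.
by rewrite modnDr.
Qed.

Lemma PAR n h A C : n = 2 * h -> 3 <= h -> good n h A -> good n h C ->
  (forall j, j < n -> stp n (nth 0 A j) (nth 0 C j) = 1 \/
                      stp n (nth 0 A j) (nth 0 C j) = n - 1) ->
  forall j, j < n -> stp n (nth 0 A j) (nth 0 C j) = stp n (nth 0 A 0) (nth 0 C 0).
Proof.
move=> nh h3 [hA gA] [hC gC] hpm.
have n0 : 0 < n by lia.
have bA := lr_bound hA; have bC := lr_bound hC.
have exAC : forall j, j < n -> stp n (nth 0 A j) (nth 0 C j) + nth 0 A j = nth 0 C j \/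
   stp n (nth 0 A j) (nth 0 C j) + nth 0 A j = nth 0 C j + n.
  by move=> j jn; have := stp_ex n0 (bA j jn) (bC j jn); lia.
have step : forall j k, j < n -> k < n -> stp n (nth 0 A j) (nth 0 C j) = 1 ->
   (nth 0 A k = nth 0 A j + 2 \/ nth 0 A k + n = nth 0 A j + 2) ->
   stp n (nth 0 A k) (nth 0 C k) = 1.
  move=> j k jn kn uj hk; case: (hpm k kn) => // uk; exfalso.
  have e : nth 0 C k = nth 0 C j.
    by move: (exAC j jn) (exAC k kn) (bA j jn) (bA k kn) (bC j jn) (bC k kn); lia.
  have ekj := lr_inj hC k j kn jn e; subst k; lia.
have ind : forall d j k, j < n -> k < n -> stp n (nth 0 A j) (nth 0 C j) = 1 ->
   (nth 0 A k = nth 0 A j + 2 * d \/ nth 0 A k + n = nth 0 A j + 2 * d) ->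
   stp n (nth 0 A k) (nth 0 C k) = 1.
  elim=> [|d IH] j k jn kn uj hk; have := bA j jn; have := bA k kn => bk bj.
    have : nth 0 A k = nth 0 A j by lia.
    by move/(lr_inj hA k j kn jn) => ->.
  case: (leqP 3 (nth 0 A k)) => hk3.
    have [k' k'n ek'] := lr_surj hA (nth 0 A k - 2) ltac:(lia).
    apply: (step k' k) => //; last by lia.
    by apply: (IH j k') => //; lia.
  have [k' k'n ek'] := lr_surj hA (nth 0 A k + n - 2) ltac:(lia).
  apply: (step k' k) => //; last by lia.
  by apply: (IH j k') => //; lia.
have par : forall j k, j < n -> k < n -> stp n (nth 0 A j) (nth 0 C j) = 1 ->
    ~~ odd (nth 0 A j + nth 0 A k) -> stp n (nth 0 A k) (nth 0 C k) = 1.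
  move=> j k jn kn uj hp; have := bA j jn; have := bA k kn => bk bj.
  case: (leqP (nth 0 A j) (nth 0 A k)) => hjk.
    by apply: (ind ((nth 0 A k - nth 0 A j)./2) j k) => //; lia.
  by apply: (ind ((nth 0 A k + n - nth 0 A j)./2) j k) => //; lia.
have same : forall j k, j < n -> k < n -> ~~ odd (nth 0 A j + nth 0 A k) ->
    stp n (nth 0 A j) (nth 0 C j) = stp n (nth 0 A k) (nth 0 C k).
  move=> j k jn kn hp.
  case: (hpm j jn) => hj; case: (hpm k kn) => hk; try lia.
    by have := par j k jn kn hj hp; lia.
  have := par k j kn jn hk ltac:(by rewrite addnC); lia.
have [p1 p1n e1] := lr_surj hA 1 ltac:(lia).
have [p2 p2n e2] := lr_surj hA 2 ltac:(lia).
have [p3 p3n e3] := lr_surj hA 3 ltac:(lia).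
have [e12 | ne12] := eqVneq (stp n (nth 0 A p1) (nth 0 C p1)) (stp n (nth 0 A p2) (nth 0 C p2)).
  have key : forall k, k < n -> stp n (nth 0 A k) (nth 0 C k) = stp n (nth 0 A p1) (nth 0 C p1).
    move=> k kn; case: (boolP (odd (nth 0 A k))) => ok.
      by apply: same => //; rewrite e1; lia.
    by rewrite e12; apply: same => //; rewrite e2; lia.
  by move=> j jn; rewrite (key j jn) (key 0 ltac:(lia)).
exfalso.
have opp : forall j k, j < n -> k < n -> odd (nth 0 A j + nth 0 A k) ->
    stp n (nth 0 A j) (nth 0 C j) + stp n (nth 0 A k) (nth 0 C k) = n.
  move=> j k jn kn hp.
  have s1 : forall k, k < n -> odd (nth 0 A k) ->
     stp n (nth 0 A k) (nth 0 C k) = stp n (nth 0 A p1) (nth 0 C p1).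
    by move=> k' kn' ok; apply: same => //; rewrite e1; lia.
  have s2 : forall k, k < n -> ~~ odd (nth 0 A k) ->
     stp n (nth 0 A k) (nth 0 C k) = stp n (nth 0 A p2) (nth 0 C p2).
    by move=> k' kn' ok; apply: same => //; rewrite e2; lia.
  have := hpm p1 p1n; have := hpm p2 p2n; move/eqP: ne12 => ne12.
  case: (boolP (odd (nth 0 A j))) => oj.
    have := s1 j jn oj; have := s2 k kn ltac:(lia); lia.
  have := s2 j jn oj; have := s1 k kn ltac:(lia); lia.
case: (boolP (odd h)) => oh.
  have inv : forall j, j < n -> ~~ odd (nth 0 A 0 + nth 0 A j).
    elim=> [|j IH] jn; first by lia.
    have jn' : j < n by lia.
    have := IH jn'; clear IH.
    case: (boolP (odd (nth 0 A j + nth 0 A j.+1))) => hp; last by lia.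
    have := opp j j.+1 jn' jn hp.
    have := gA j ltac:(lia); have := gC j ltac:(lia).
    have := stp_ex n0 (bA j jn') (bA j.+1 jn).
    have := stp_cong n0 (bA j jn') (bA j.+1 jn) (bC j jn') (bC j.+1 jn).
    have := hpm j jn'; have := hpm j.+1 jn.
    lia.
  have := inv p1 p1n; have := inv p2 p2n; rewrite e1 e2; lia.
have inv : forall j, j < n -> (nth 0 A j + nth 0 C j) %% n = (nth 0 A 0 + nth 0 C 0) %% n.
  elim=> [|j IH] jn; first by [].
  have jn' : j < n by lia.
  rewrite -(IH jn'); clear IH.
  apply: stp_sum_mod; [exact: bA | exact: bC |].
  have := gA j ltac:(lia); have := gC j ltac:(lia).
  have := stp_ex n0 (bA j jn') (bA j.+1 jn).
  have := stp_cong n0 (bA j jn') (bA j.+1 jn) (bC j jn') (bC j.+1 jn).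
  have := hpm j jn'; have := hpm j.+1 jn.
  case: (boolP (odd (nth 0 A j + nth 0 A j.+1))) => hp.
    have := opp j j.+1 jn' jn hp; lia.
  have := same j j.+1 jn' jn hp; lia.
have := inv p1 p1n; rewrite -(inv p3 p3n); clear inv.
have := @mod_small (nth 0 A p1 + nth 0 C p1) n n0 ltac:(have := bA p1 p1n; have := bC p1 p1n; lia).
have := @mod_small (nth 0 A p3 + nth 0 C p3) n n0 ltac:(have := bA p3 p3n; have := bC p3 p3n; lia).
have := exAC p1 p1n; have := exAC p3 p3n.
have := hpm p1 p1n; have := same p1 p3 p1n p3n ltac:(by rewrite e1 e3).
have := bC p1 p1n; have := bC p3 p3n.
rewrite e1 e3.
set m1 := (1 + nth 0 C p1) %% n; set m2 := (3 + nth 0 C p3) %% n.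
clearbody m1 m2; lia.
Qed.

Arguments stp_ex {n a b}.

Lemma TR n h A B C : n = 2 * h -> 3 <= h -> good n h A -> good n h B -> good n h C ->
  (forall j, j < n -> stp n (nth 0 A j) (nth 0 B j) = stp n (nth 0 A 0) (nth 0 B 0)) ->
  h - 1 <= stp n (nth 0 A 0) (nth 0 B 0) <= h + 1 ->
  (forall j, j < n -> h - 1 <= stp n (nth 0 B j) (nth 0 C j) <= h + 1) ->
  (forall j, j < n -> nth 0 C j <> nth 0 A j) ->
  forall j, j < n -> stp n (nth 0 B j) (nth 0 C j) = stp n (nth 0 B 0) (nth 0 C 0).
Proof.
move=> nh h3 gA gB gC cAB bAB bBC neq.
have n0 : 0 < n by lia.
have bA := lr_bound gA.1; have bB := lr_bound gB.1; have bC := lr_bound gC.1.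
have n00 : 0 < n by lia.
have [ch|chn] := eqVneq (stp n (nth 0 A 0) (nth 0 B 0)) h.
  have pm : forall j, j < n -> stp n (nth 0 A j) (nth 0 C j) = 1 \/
                      stp n (nth 0 A j) (nth 0 C j) = n - 1.
    move=> j jn; have := cAB j jn; have := bBC j jn; have := neq j jn.
    have := bA j jn; have := bB j jn; have := bC j jn.
    have := stp_ex n0 (bA j jn) (bB j jn); have := stp_ex n0 (bB j jn) (bC j jn).
    have := stp_ex n0 (bA j jn) (bC j jn). lia.
  have P := PAR _ _ _ _ nh h3 gA gC pm.
  move=> j jn; have := bA j jn; have := bB j jn; have := bC j jn.
  have := bA 0 n00; have := bB 0 n00; have := bC 0 n00.
  have := P j jn; have := cAB j jn; have := bBC j jn; have := bBC 0 n00.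
  have := stp_ex n0 (bA j jn) (bB j jn); have := stp_ex n0 (bB j jn) (bC j jn).
  have := stp_ex n0 (bA j jn) (bC j jn).
  have := stp_ex n0 (bA 0 n00) (bB 0 n00); have := stp_ex n0 (bB 0 n00) (bC 0 n00).
  have := stp_ex n0 (bA 0 n00) (bC 0 n00). lia.
have hs : (\sum_(j < n) (stp n (nth 0 B j) (nth 0 C j) + 1 - h)) %% n = 0.
  have e : \sum_(j < n) (stp n (nth 0 B j) (nth 0 C j) + 1 - h) + n * (h - 1) =
           \sum_(j < n) stp n (nth 0 B j) (nth 0 C j).
    have -> : n * (h - 1) = \sum_(j < n) (h - 1) by rewrite sum_nat_const card_ord.
    rewrite -big_split /=; apply: eq_bigr => j _; have := bBC j (ltn_ord j); lia.
  have := sum_stp_mod _ _ _ gB.1 gC.1; rewrite -e [_ + n * _]addnC mulnC modnMDl.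
  by [].
have hF : forall j, j < n -> (fun j => stp n (nth 0 B j) (nth 0 C j) + 1 - h) j <= 2.
  by move=> j jn /=; have := bBC j jn; lia.
have := @L1 n (fun j => stp n (nth 0 B j) (nth 0 C j) + 1 - h) n0 hF hs.
case.
- by move=> H j jn; have := H j jn; have := H 0 n00; have := bBC j jn; have := bBC 0 n00; lia.
case.
- by move=> H j jn; have := H j jn; have := H 0 n00; have := bBC j jn; have := bBC 0 n00; lia.
case.
- by move=> H j jn; have := H j jn; have := H 0 n00; have := bBC j jn; have := bBC 0 n00; lia.
- move=> [[j1 j1n e1] [j2 j2n e2]]; exfalso.
  have := bBC j1 j1n; have := bBC j2 j2n; move: e1 e2 => /= e1 e2.
  have := cAB j1 j1n; have := cAB j2 j2n; have := neq j1 j1n; have := neq j2 j2n.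
  have := stp_ex n0 (bA j1 j1n) (bB j1 j1n); have := stp_ex n0 (bB j1 j1n) (bC j1 j1n).
  have := stp_ex n0 (bA j2 j2n) (bB j2 j2n); have := stp_ex n0 (bB j2 j2n) (bC j2 j2n).
  have := bA j1 j1n; have := bB j1 j1n; have := bC j1 j1n.
  have := bA j2 j2n; have := bB j2 j2n; have := bC j2 j2n.
  move/eqP: chn. lia.
Qed.

Arguments stp_ex {n a b}.
Arguments stp_cong {n a b c d}.
Arguments bigmin_seq_ge {T L k x G}. Arguments bigmin_ge {m k x F}.
Arguments good_of {n h s}. Arguments dist_step {n h a b}.

Lemma stp_shift n a b a' b' : 0 < n -> 1 <= a <= n -> 1 <= b <= n -> 1 <= a' <= n -> 1 <= b' <= n ->
  stp n a a' = stp n b b' -> stp n a b = stp n a' b'.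
Proof.
move=> n0 ha hb ha' hb' e.
have := stp_ex n0 ha hb; have := stp_ex n0 ha' hb'; have := stp_ex n0 ha ha'; have := stp_ex n0 hb hb'.
lia.
Qed.

Lemma diffrow_eq n r r' : 0 < n -> latin_row n r -> latin_row n r' ->
  (forall j, j < n.-1 -> stp n (nth 0 r j) (nth 0 r' j) = stp n (nth 0 r j.+1) (nth 0 r' j.+1)) ->
  diffrow n r = diffrow n r'.
Proof.
move=> n0 hr hr' e; rewrite /diffrow (lr_size hr) (lr_size hr').
apply: (@eq_from_nth _ 0); rewrite ?size_mkseq // => j jn.
rewrite !nth_mkseq //; apply: stp_shift => //; try apply: lr_bound => //; try lia.
exact: e.
Qed.

Lemma nth_ext n r k : size r = n -> k < n.-1 ->
  nth (0:int) (extdiff n r) k = (Posz (stp n (nth 0%N r k) (nth 0%N r k.+1)) - Posz n./2)%R.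
Proof.
move=> sz kn; rewrite /extdiff nth_cat size_mkseq kn nth_mkseq // /diffrow nth_mkseq //.
by rewrite sz.
Qed.

Lemma ext_last n r : size r = n -> 0 < n ->
  (head 0 r + n - last 0 r) %% n = stp n (nth 0 r n.-1) (nth 0 r 0).
Proof.
move=> sz n0; rewrite /stp -sz nth_last; case: r sz => [|x r] //= sz.

Qed.

Lemma tele (f g : nat -> int) a b : a <= b ->
  (forall k, a <= k < b -> f k = (g k.+1 - g k)%R) ->
  (\sum_(a.+1 <= j < b.+1) f j.-1 = g b - g a)%R.
Proof.
elim: b => [|b IH] ab hf.
  have -> : a = 0 by lia.
  by rewrite big_geq // subrr.
case: (eqVneq a b.+1) => [->|ne]; first by rewrite big_geq // subrr.
have ab' : a <= b by lia.
rewrite big_nat_recr /=; last by lia.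
rewrite IH //; last by move=> k hk; apply: hf; lia.
rewrite hf; last by lia.
lia.
Qed.

Lemma part_a n : ~~ odd n -> 6 <= n ->
  forall d d' : seq int, is_edr n d -> is_edr n d' ->
     neighbors n d d' -> d <> d' -> determined n d d'.
Proof.
move=> ev n6 d d' _ _ [r [r' [ed [ed' [hL hI]]]]] dd.
set h := n./2 in hI.
have nh : n = 2 * h by rewrite /h; lia.
have h3 : 3 <= h by lia.
have n0 : 0 < n by lia.
move: hL; rewrite /latin_rect /= andbT => /andP[/andP[hr hr'] _].
move: hI; rewrite /rect_innerdist => hI.
have hI' : h - 1 <= minn (\big[minn/n]_(x <- [:: r; r']) innerdist n x)
                          (\big[minn/n]_(j < n) innerdist n (Defs.col [:: r; r'] j)) by lia.
move: hI'; rewrite leq_min => /andP[hR hC].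
have gr : good n h r.
  apply: good_of => //; apply: (bigmin_seq_ge hR); by rewrite inE eqxx.
have gr' : good n h r'.
  apply: good_of => //; apply: (bigmin_seq_ge hR); by rewrite !inE eqxx orbT.
have br := lr_bound hr; have br' := lr_bound hr'.
have hv : forall j, j < n -> h - 1 <= stp n (nth 0 r j) (nth 0 r' j) <= h + 1.
  move=> j jn; apply: dist_step => //; try exact: br; try exact: br'.
  have := @bigmin_ge n _ n (fun j => innerdist n (Defs.col [:: r; r'] j)) hC j jn.
  rewrite /innerdist /= => hh.
  exact: (@bigmin_ge 1 _ n (fun k => dist n (nth 0 [:: nth 0 r j; nth 0 r' j] k)
     (nth 0 [:: nth 0 r j; nth 0 r' j] k.+1)) hh 0 (ltn0Sn 0)).
set v := fun j => stp n (nth 0 r j) (nth 0 r' j).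
have hs : (\sum_(j < n) (v j + 1 - h)) %% n = 0.
  have e : \sum_(j < n) (v j + 1 - h) + n * (h - 1) = \sum_(j < n) v j.
    have -> : n * (h - 1) = \sum_(j < n) (h - 1) by rewrite sum_nat_const card_ord.
    rewrite -big_split /=; apply: eq_bigr => j _; have := hv j (ltn_ord j); rewrite /v; lia.
  have := sum_stp_mod _ _ _ hr hr'; rewrite -/v -e [_ + n * _]addnC mulnC modnMDl.
  by [].
have hF : forall j, j < n -> (fun j => v j + 1 - h) j <= 2.
  by move=> j jn /=; have := hv j jn; rewrite /v; lia.
have := @L1 n (fun j => v j + 1 - h) n0 hF hs.
have const : (forall j, j < n -> v j = v 0) -> False.
  move=> H; apply: dd; rewrite -ed -ed'.
  have sr := lr_size hr; have sr' := lr_size hr'.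
  have dr : diffrow n r = diffrow n r'.
    apply: diffrow_eq => // j jn.
    by have := H j ltac:(lia); have := H j.+1 ltac:(lia); rewrite /v => -> ->.
  rewrite /extdiff dr (ext_last _ _ sr n0) (ext_last _ _ sr' n0).
  congr (_ ++ [:: (Posz _ - _)%R]).
  apply: stp_shift => //; try apply: br; try apply: br'; try lia.
  by have := H n.-1 ltac:(lia); rewrite /v => ->.
case.
  by move=> H; exfalso; apply: const => j jn; have := H j jn; have := H 0 n0; have := hv j jn;
     have := hv 0 n0; rewrite /v; lia.
case.
  by move=> H; exfalso; apply: const => j jn; have := H j jn; have := H 0 n0; have := hv j jn;
     have := hv 0 n0; rewrite /v; lia.
case.
  by move=> H; exfalso; apply: const => j jn; have := H j jn; have := H 0 n0; have := hv j jn;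
     have := hv 0 n0; rewrite /v; lia.
move=> [[j1 j1n e1] [j2 j2n e2]]; move: e1 e2 => /= e1 e2.
have hj1 := hv j1 j1n; have hj2 := hv j2 j2n.
have key : forall k, k < n.-1 ->
    (nth (0:int) d' k - nth (0:int) d k)%R = ((Posz (v k.+1)) - Posz (v k))%R.
  move=> k kn; rewrite -ed -ed' (nth_ext _ _ _ (lr_size hr) kn) (nth_ext _ _ _ (lr_size hr') kn).
  have := gr.2 k kn; have := gr'.2 k kn; have := hv k ltac:(lia); have := hv k.+1 ltac:(lia).
  have := stp_cong n0 (br k ltac:(lia)) (br' k ltac:(lia)) (br k.+1 ltac:(lia)) (br' k.+1 ltac:(lia)).
  rewrite /v -/h. lia.
have ne : j1 <> j2 by move=> E; subst j2; lia.
case: (ltngtP j1 j2) => [lt|lt|]; last by [].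
- rewrite /determined; exists j1.+1; exists j2.+1; split; first by split; lia.
  rewrite (@tele (fun k => nth (0:int) d' k - nth (0:int) d k)%R (fun k => Posz (v k)) j1 j2); first last.
  + by move=> k hk; apply: key; lia.
  + by lia.
  have -> : (Posz (v j2) - Posz (v j1))%R = 2%R by move: e1 e2; rewrite /v; lia.
  by [].
- rewrite /determined; exists j2.+1; exists j1.+1; split; first by split; lia.
  rewrite (@tele (fun k => nth (0:int) d' k - nth (0:int) d k)%R (fun k => Posz (v k)) j2 j1); first last.
  + by move=> k hk; apply: key; lia.
  + by lia.
  have -> : (Posz (v j1) - Posz (v j2))%R = (-2)%R by move: e1 e2; rewrite /v; lia.
  by [].
Qed.

Arguments stp_ex {n a b}.
Arguments stp_cong {n a b c d}.
Arguments bigmin_seq_ge {T L k x G}. Arguments bigmin_ge {m k x F}.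
Arguments good_of {n h s}. Arguments dist_step {n h a b}.
Arguments stp_shift {n a b a' b'}.

Lemma stp_sym n a b : 0 < n -> 1 <= a <= n -> 1 <= b <= n -> a <> b -> stp n b a = n - stp n a b.
Proof. move=> n0 ha hb ne; have := stp_ex n0 ha hb; have := stp_ex n0 hb ha; lia. Qed.

Lemma stp_congr n a a' c : 0 < n -> 1 <= a <= n -> 1 <= a' <= n ->
  a = a' + c %[mod n] -> stp n a' a = c %% n.
Proof.
move=> n0 ha ha' e; rewrite /stp; apply/eqP.
rewrite -(eqn_modDr a'); apply/eqP.
rewrite subnK; last by lia.
by rewrite modnDr addnC.
Qed.

Definition fsh n e x := ((x + n - e) %% n).+1.

Lemma fsh_spec n e x : 0 < n -> 1 <= e <= n -> 1 <= x <= n ->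
  (e <= x /\ fsh n e x = x + 1 - e) \/ (x < e /\ fsh n e x = x + n + 1 - e).
Proof.
move=> n0 he hx; rewrite /fsh; have := @mod_small (x + n - e) n n0 ltac:(lia). lia.
Qed.

Arguments fsh_spec {n e x}.
Lemma fsh_stp n e x y : 0 < n -> 1 <= e <= n -> 1 <= x <= n -> 1 <= y <= n ->
  stp n (fsh n e x) (fsh n e y) = stp n x y.
Proof.
move=> n0 he hx hy.
have fx := fsh_spec n0 he hx; have fy := fsh_spec n0 he hy.
have bx : 1 <= fsh n e x <= n by lia.
have by' : 1 <= fsh n e y <= n by lia.
have := stp_ex n0 bx by'; have := stp_ex n0 hx hy; lia.
Qed.

Lemma diffrow_map n e (s : seq nat) : 0 < n -> 1 <= e <= n -> (forall x, x \in s -> 1 <= x <= n) ->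
  diffrow n (map (fsh n e) s) = diffrow n s.
Proof.
move=> n0 he hs; rewrite /diffrow size_map.
apply: (@eq_from_nth _ 0); rewrite ?size_mkseq // => j jn.
have j1 : j.+1 < size s by lia.
have j0 : j < size s by lia.
rewrite !nth_mkseq //.
rewrite !(nth_map 0) //.
rewrite -/(stp n _ _) -/(stp n _ _) fsh_stp //; apply: hs; exact: mem_nth.
Qed.

Arguments stp_ex {n a b}.
Arguments stp_cong {n a b c d}.
Arguments bigmin_seq_ge {T L k x G}. Arguments bigmin_ge {m k x F}.
Arguments good_of {n h s}. Arguments dist_step {n h a b}.
Arguments stp_shift {n a b a' b'}.
Arguments stp_sym {n a b}.

Lemma nth_diffrow n s j : j < (size s).-1 ->
  nth 0 (diffrow n s) j = stp n (nth 0 s j) (nth 0 s j.+1).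
Proof. by move=> jn; rewrite /diffrow nth_mkseq. Qed.

Lemma latin_of_uniq n (s : seq nat) : size s = n -> uniq s -> (forall i, i < n -> 1 <= nth 0 s i <= n) ->
  latin_row n s.
Proof.
move=> sz u hb; rewrite /latin_row; apply: uniq_perm => //; first exact: iota_uniq.
have sub : {subset s <= iota 1 n}.
  move=> x /(nthP 0) [i iN <-]; rewrite mem_iota; have /andP[h1 h2] := hb i ltac:(by rewrite -sz).
  by rewrite h1 add1n ltnS h2.
by have [_] := @uniq_min_size _ s (iota 1 n) u sub ltac:(by rewrite size_iota sz).
Qed.

Definition vc n (L : seq (seq nat)) i := forall j, j < n ->
  stp n (nth 0 (nth [::] L i) j) (nth 0 (nth [::] L i.+1) j) =
  stp n (nth 0 (nth [::] L i) 0) (nth 0 (nth [::] L i.+1) 0).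

Arguments stp_ex {n a b}.
Arguments stp_cong {n a b c d}.
Arguments bigmin_seq_ge {T L k x G}. Arguments bigmin_ge {m k x F}.
Arguments good_of {n h s}. Arguments dist_step {n h a b}.
Arguments stp_shift {n a b a' b'}.
Arguments stp_sym {n a b}.

Lemma part_b n : ~~ odd n -> 6 <= n -> forall L : seq (seq nat), latin_square n L ->
  rect_innerdist n L = n./2 - 1 ->
  (row_product n L <-> exists i, 1 <= i <= n - 1 /\
        diffrow n (nth [::] L i.-1) = diffrow n (nth [::] L i)).
Proof.
move=> ev n6 L hL hI.
set h := n./2 in hI.
have nh : n = 2 * h by rewrite /h; lia.
have h3 : 3 <= h by lia.
have n0 : 0 < n by lia.
move: (hL); rewrite /latin_square /latin_rect => /andP[/eqP szL /andP[/allP hrows /allP hcols]].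
have hR : forall i, i < n -> latin_row n (nth [::] L i).
  by move=> i iN; apply: hrows; apply: mem_nth; rewrite szL.
have bR : forall i j, i < n -> j < n -> 1 <= nth 0 (nth [::] L i) j <= n.
  by move=> i j iN jN; apply: lr_bound => //; apply: hR.
have szR : forall i, i < n -> size (nth [::] L i) = n by move=> i iN; exact: lr_size (hR i iN).
split.
  move=> [_ [d [d' [M [c [_ _ [szM rowsM e00 drM dcM] cong]]]]]].
  have key : forall i, i < n -> diffrow n (nth [::] L i) = d.
    move=> i iN.
    have Mi : nth [::] M i \in M by apply: mem_nth; rewrite szM.
    have /andP[/eqP szMi /allP bMi] := allP rowsM _ Mi.
    have <- : diffrow n (nth [::] M i) = d by apply/eqP; exact: (allP drM _ Mi).
    have bM : forall j, j < n -> 1 <= nth 0 (nth [::] M i) j <= n.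
      by move=> j jN; apply: bMi; apply: mem_nth; rewrite szMi.
    have sh : forall j, j < n -> stp n (nth 0 (nth [::] M i) j) (nth 0 (nth [::] L i) j) = c %% n.
      by move=> j jN; apply: stp_congr => //; [exact: bR | exact: bM | exact: cong].
    rewrite /diffrow (szR i iN) szMi.
    apply: (@eq_from_nth _ 0); rewrite ?size_mkseq // => j jN.
    rewrite !nth_mkseq // -/(stp n _ _) -/(stp n _ _).
    symmetry; apply: stp_shift => //; try apply: bR; try apply: bM; try lia.
    by rewrite (sh j ltac:(lia)) (sh j.+1 ltac:(lia)).
  exists 1; split; first lia.
  by rewrite /= key // key //; lia.
move=> [i0 [hi0 hd0]].
have hI' : h - 1 <= minn (\big[minn/n]_(r <- L) innerdist n r)
     (\big[minn/n]_(j < n) innerdist n (Defs.col L j)) by move: hI; rewrite /rect_innerdist; lia.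
move: hI'; rewrite leq_min => /andP[hIR hIC].
have gR : forall i, i < n -> good n h (nth [::] L i).
  move=> i iN; apply: good_of => //; first exact: hR.
  apply: (bigmin_seq_ge hIR); apply: mem_nth; by rewrite szL.
have colE : forall j i, i < n -> nth 0 (Defs.col L j) i = nth 0 (nth [::] L i) j.
  by move=> j i iN; rewrite /Defs.col (nth_map [::]) // szL.
have szcol : forall j, size (Defs.col L j) = n by move=> j; rewrite size_map.
have vstep : forall j i, j < n -> i < n.-1 ->
    h - 1 <= stp n (nth 0 (nth [::] L i) j) (nth 0 (nth [::] L i.+1) j) <= h + 1.
  move=> j i jN iN.
  have := @bigmin_ge n _ n (fun j => innerdist n (Defs.col L j)) hIC j jN.
  rewrite /innerdist szcol => hh.
  have := @bigmin_ge n.-1 _ n (fun k => dist n (nth 0 (Defs.col L j) k) (nth 0 (Defs.col L j) k.+1)) hh i iN.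
  rewrite /= !colE; try lia.
  move=> hd; apply: dist_step => //; apply: bR; lia.
have cdist : forall j i i', j < n -> i < n -> i' < n -> i <> i' ->
    nth 0 (nth [::] L i) j <> nth 0 (nth [::] L i') j.
  move=> j i i' jN iN i'N ne e.
  have u : uniq (Defs.col L j) by apply: hcols; rewrite mem_iota; lia.
  move: e; rewrite -!colE // => /eqP; rewrite nth_uniq ?szcol //.
  by move/eqP.
have fwd : forall i, i.+2 < n -> vc n L i -> vc n L i.+1.
  move=> i iN v.
  apply: (@TR n h (nth [::] L i)) => //; try apply: gR; try lia.
  all: try (by apply: vstep; lia).
  - by move=> j jN; apply: vstep; lia.
  - by move=> j jN; apply: cdist => //; lia.
have bwd : forall i, i.+2 < n -> vc n L i.+1 -> vc n L i.
  move=> i iN v.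
  have T := @TR n h (nth [::] L i.+2) (nth [::] L i.+1) (nth [::] L i) nh h3
     (gR _ iN) (gR i.+1 ltac:(lia)) (gR i ltac:(lia)).
  have e1 : forall j, j < n -> stp n (nth 0 (nth [::] L i.+2) j) (nth 0 (nth [::] L i.+1) j) =
       n - stp n (nth 0 (nth [::] L i.+1) j) (nth 0 (nth [::] L i.+2) j).
    move=> j jN; apply: stp_sym => //; try apply: bR; try lia.
    by apply: cdist => //; lia.
  have e2 : forall j, j < n -> stp n (nth 0 (nth [::] L i.+1) j) (nth 0 (nth [::] L i) j) =
       n - stp n (nth 0 (nth [::] L i) j) (nth 0 (nth [::] L i.+1) j).
    move=> j jN; apply: stp_sym => //; try apply: bR; try lia.
    by apply: cdist => //; lia.
  have T2 : forall j, j < n -> stp n (nth 0 (nth [::] L i.+1) j) (nth 0 (nth [::] L i) j) =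
      stp n (nth 0 (nth [::] L i.+1) 0) (nth 0 (nth [::] L i) 0).
    apply: T.
    - move=> j jN; rewrite !e1 // (v j jN); lia.
    - rewrite e1 //; have := vstep 0 i.+1 n0 ltac:(lia); lia.
    - move=> j jN; rewrite e2 //; have := vstep j i jN ltac:(lia); lia.
    - move=> j jN; apply: cdist => //; lia.
  move=> j jN; have := T2 j jN; rewrite !e2 //.
  have := vstep j i jN ltac:(lia); have := vstep 0 i n0 ltac:(lia); lia.
have v0 : vc n L i0.-1.
  have hk : forall j, j < n.-1 ->
      stp n (nth 0 (nth [::] L i0.-1) j) (nth 0 (nth [::] L i0.-1) j.+1) =
      stp n (nth 0 (nth [::] L i0) j) (nth 0 (nth [::] L i0) j.+1).
    move=> j jN; rewrite -!nth_diffrow ?hd0 // ?szR //; lia.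
  have sh : forall j, j < n.-1 ->
      stp n (nth 0 (nth [::] L i0.-1) j) (nth 0 (nth [::] L i0) j) =
      stp n (nth 0 (nth [::] L i0.-1) j.+1) (nth 0 (nth [::] L i0) j.+1).
    move=> j jN; apply: stp_shift => //; try apply: bR; try lia.
    exact: hk.
  have e : i0.-1.+1 = i0 by lia.
  rewrite /vc e; elim=> [|j IH] jN //.
  rewrite -IH; last by lia.
  by symmetry; apply: sh; lia.
have allvc : forall k, k.+1 < n -> vc n L k.
  have F : forall m, i0.-1 + m + 1 < n -> vc n L (i0.-1 + m).
    elim=> [|m IH] hm; first by rewrite addn0.
    rewrite addnS; apply: fwd; first by lia.
    by apply: IH; lia.
  have B : forall m, m <= i0.-1 -> vc n L (i0.-1 - m).
    elim=> [|m IH] hm; first by rewrite subn0.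
    have e : i0.-1 - m = (i0.-1 - m.+1).+1 by lia.
    apply: bwd; first by lia.
    by rewrite -e; apply: IH; lia.
  move=> k kN; case: (leqP i0.-1 k) => hk.
    have := F (k - i0.-1) ltac:(lia); by rewrite subnKC.
  have := B (i0.-1 - k) ltac:(lia); by rewrite subKn //; lia.
set e := nth 0 (nth [::] L 0) 0.
have be : 1 <= e <= n by apply: bR.
have rowsD : forall i, i < n -> diffrow n (nth [::] L i) = diffrow n (nth [::] L 0).
  elim=> [|i IH] iN //; rewrite -IH; last by lia.
  symmetry; apply: diffrow_eq => //; try apply: hR; try lia.
  move=> j jN; have v := allvc i ltac:(lia).
  by rewrite (v j ltac:(lia)) (v j.+1 ltac:(lia)).
have colD : forall j, j < n -> diffrow n (Defs.col L j) = diffrow n (Defs.col L 0).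
  move=> j jN; rewrite /diffrow !szcol.
  apply: (@eq_from_nth _ 0); rewrite ?size_mkseq // => k kN.
  rewrite !nth_mkseq // -/(stp n _ _) -/(stp n _ _) !colE; try lia.
  by have v := allvc k ltac:(lia); rewrite (v j jN).
have colL : forall j, j < n -> latin_row n (Defs.col L j).
  move=> j jN; apply: latin_of_uniq => //.
    by apply: hcols; rewrite mem_iota; lia.
  by move=> i iN; rewrite colE //; apply: bR.
have mapR : forall r, r \in L -> size r = n by move=> r rL; exact: lr_size (hrows r rL).
split => //.
exists (diffrow n (nth [::] L 0)), (diffrow n (Defs.col L 0)),
  [seq map (fsh n e) r | r <- L], (e - 1).
split.
- by exists (nth [::] L 0); split => //; apply: hR.
- by exists (Defs.col L 0); split => //; apply: colL.
- split.
  + by rewrite size_map.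
  + apply/allP => r' /mapP [r rL ->]; rewrite size_map mapR // eqxx /=.
    by apply/allP => x /mapP [y _ ->]; rewrite /fsh ltn_pmod.
  + rewrite /entry (nth_map [::]) ?szL // (nth_map 0) ?szR // /fsh -/e.
    by rewrite addKn modnn.
  + apply/allP => r' /mapP [r rL ->]; rewrite diffrow_map //.
      have [i iN <-] := (nthP [::]) rL; rewrite szL in iN.
      by rewrite rowsD.
    by move=> x xr; rewrite -(lr_mem (hrows r rL)).
  + apply/allP => j; rewrite mem_iota add0n => /andP[_ jN].
    have -> : Defs.col [seq map (fsh n e) r | r <- L] j = map (fsh n e) (Defs.col L j).
      rewrite /Defs.col -!map_comp; apply/eq_in_map => r rL /=.
      by rewrite (nth_map 0) // mapR.
    rewrite diffrow_map //; first by rewrite colD.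
    by move=> x xc; rewrite -(lr_mem (colL j jN)).
- move=> i j iN jN; rewrite /entry (nth_map [::]) ?szL // (nth_map 0) ?szR // /fsh.
  set x := nth 0 (nth [::] L i) j.
  have bx : 1 <= x <= n by apply: bR.
  have -> : ((x + n - e) %% n).+1 + (e - 1) = (x + n - e) %% n + e.
    by rewrite -addn1 -addnA; congr (_ + _); lia.
  rewrite modnDml subnK; last by lia.
  by rewrite modnDr.
Qed.


Theorem mainTheorem8 (n : nat) : ~~ odd n -> 6 <= n ->
  (forall d d' : seq int, is_edr n d -> is_edr n d' ->
     neighbors n d d' -> d <> d' -> determined n d d') /\
  (forall L : seq (seq nat), latin_square n L ->
     rect_innerdist n L = n./2 - 1 ->
     (row_product n L <->
      exists i, 1 <= i <= n - 1 /\
        diffrow n (nth [::] L i.-1) = diffrow n (nth [::] L i))).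
Proof.
move=> ev n6; split; first exact: part_a.
exact: part_b.
Qed.
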